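(* Let $m\ge2$, $k\ge1$, $n\ge1$, $\mathcal{A}\in\mathbb{R}_+^{[m,n]}$ and $\mathcal{B}\in\mathbb{R}_+^{[k,n]}$ with $r_i(\mathcal{B})\neq0$ for all $i\in[n]$. Then \[\min_{i\in[n]}\frac{r_i(\mathcal{A}\mathcal{B})}{(r_i(\mathcal{B}))^{m-1}}\le\rho(\mathcal{A})\le\max_{i\in[n]}\frac{r_i(\mathcal{A}\mathcal{B})}{(r_i(\mathcal{B}))^{m-1}}.\]
   Context: $[n]=\{1,\ldots,n\}$. $\mathbb{C}^{[m,n]}$ (resp. $\mathbb{R}_+^{[m,n]}$) denotes the set of order $m$, dimension $n$ tensors $\mathcal{A}=(a_{i_1\cdots i_m})$, $i_j\in[n]$, with complex (resp. nonnegative real) entries; for $k=1$ these are vectors in $\mathbb{C}^n$ (resp. nonnegative vectors). For a tensor $\mathcal{T}=(t_{i_1\cdots i_p})$ of order $p$ and dimension $n$, $r_i(\mathcal{T})=\sum_{i_2,\ldots,i_p=1}^n|t_{ii_2\cdots i_p}|$ (for $p=1$, $r_i(\mathcal{T})=|t_i|$). General product: for $\mathcal{A}\in\mathbb{C}^{[m,n]}$ ($m\ge2$), $\mathcal{B}\in\mathbb{C}^{[k,n]}$ ($k\ge1$), $\mathcal{A}\mathcal{B}=(c_{i\alpha_1\cdots\alpha_{m-1}})$ is the order $(m-1)(k-1)+1$, dimension $n$ tensor with $c_{i\alpha_1\cdots\alpha_{m-1}}=\sum_{i_2,\ldots,i_m=1}^n a_{ii_2\cdots i_m}b_{i_2\alpha_1}\cdots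 b_{i_m\alpha_{m-1}}$, $i\in[n]$, $\alpha_j\in[n]^{k-1}$ (where $b_{j\alpha}$ with $\alpha=(j_2,\ldots,j_k)$ means $b_{jj_2\cdots j_k}$). Eigenvalues: for $\mathcal{A}\in\mathbb{C}^{[m,n]}$ and $x\in\mathbb{C}^n$, $(\mathcal{A}x^{m-1})_i=\sum_{i_2,\ldots,i_m=1}^n a_{ii_2\cdots i_m}x_{i_2}\cdots x_{i_m}$; $\lambda\in\mathbb{C}$ is an eigenvalue of $\mathcal{A}$ if there is a nonzero $x\in\mathbb{C}^n$ with $\mathcal{A}x^{m-1}=\lambda x^{[m-1]}$, where $x^{[m-1]}=(x_1^{m-1},\ldots,x_n^{m-1})^{\mathrm T}$. The spectral radius $\rho(\mathcal{A})$ is the maximum modulus of the eigenvalues of $\mathcal{A}$. *)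

(* Defs.v *)
From HB Require Import structures.
From mathcomp Require Import all_boot all_order all_algebra.
From mathcomp Require Import complex.
From mathcomp Require Import all_classical all_reals.
Set Implicit Arguments. Unset Strict Implicit. Unset Printing Implicit Defensive.
Import Order.TTheory GRing.Theory Num.Theory.
Local Open Scope ring_scope.

(* A tensor of order p and dimension n with entries in T is represented as
   'I_n -> J -> T, where the first index i ranges over 'I_n and the
   remaining (p-1) indices are collected in a finite index type J. *)
Definition tensor (T : Type) (p n : nat) := 'I_n -> (p.-1).-tuple 'I_n -> T.

Definition rowsum (R : numDomainType) (n : nat) (J : finType)
  (T : 'I_n -> J -> R) (i : 'I_n) : R := \sum_(j : J) `|T i j|.

(* General product AB of A (order m) and B (order k): an order
   (m-1)(k-1)+1 tensor whose trailing index is (alpha_1, ..., alpha_{m-1}),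
   each alpha_j in [n]^{k-1}:
   c_{i alpha_1..alpha_{m-1}} = sum_{i_2..i_m} a_{i i_2..i_m} b_{i_2 alpha_1} ... b_{i_m alpha_{m-1}} *)
Definition tprod (R : semiRingType) (m k n : nat) (A : tensor R m n) (B : tensor R k n)
  : 'I_n -> (m.-1).-tuple ((k.-1).-tuple 'I_n) -> R :=
  fun i alpha => \sum_(t : (m.-1).-tuple 'I_n)
      A i t * \prod_(j < m.-1) B (tnth t j) (tnth alpha j).

Definition tapply (C : semiRingType) (m n : nat) (A : tensor C m n) (x : 'I_n -> C) (i : 'I_n) : C :=
  \sum_(t : (m.-1).-tuple 'I_n) A i t * \prod_(j < m.-1) x (tnth t j).

Definition is_eigenvalue (C : ringType) (m n : nat) (A : tensor C m n) (lambda : C) : Prop :=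
  exists x : 'I_n -> C, (exists i, x i != 0) /\
    forall i, tapply A x i = lambda * x i ^+ (m.-1).

Definition tensorC (R : rcfType) (m n : nat) (A : tensor R m n) : tensor R[i] m n :=
  fun i t => (A i t)%:C%C.

(* spectral radius of a real tensor: the largest modulus of the (complex)
   eigenvalues of A (a maximum, since the eigenvalue set is finite and nonempty) *)
Definition spectral_radius (R : realType) (m n : nat) (A : tensor R m n) : R :=
  sup [set ComplexField.Normc.normc lambda | lambda in [set l | is_eigenvalue (tensorC A) l]]%classic.

(* Main.v *)
Require Import Defs.
From HB Require Import structures.
From mathcomp Require Import all_boot all_order all_algebra.
From mathcomp Require Import complex.
From mathcomp Require Import all_classical all_reals.
From mathcomp Require Import all_analysis.
From mathcomp Require Import ring lra.
Import Order.TTheory GRing.Theory Num.Theory.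
Local Open Scope ring_scope.
Set Implicit Arguments. Unset Strict Implicit. Unset Printing Implicit Defensive.

Module Helpers.
Import numFieldTopology.Exports numFieldNormedType.Exports.

Section Alg.
Variable R : realType.
Variables (n p : nat).
Implicit Types (A : 'I_n -> p.-tuple 'I_n -> R) (x y : 'I_n -> R).

Definition tap A x i := \sum_(t : p.-tuple 'I_n) A i t * \prod_(j < p) x (tnth t j).

Lemma tap_scale A s x i : tap A (fun j => s * x j) i = s ^+ p * tap A x i.
Proof.
rewrite /tap mulr_sumr; apply: eq_bigr => t _.
rewrite big_split /= prodr_const card_ord; ring.
Qed.

Lemma tap_mono A x y i : (forall i t, 0 <= A i t) -> (forall j, 0 <= x j) ->
  (forall j, x j <= y j) -> tap A x i <= tap A y i.
Proof.
move=> hA hx hxy; apply: ler_sum => t _; apply: ler_wpM2l => //.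
by apply: ler_prod => j _; rewrite hx hxy.
Qed.

Lemma tap_ge0 A x i : (forall i t, 0 <= A i t) -> (forall j, 0 <= x j) -> 0 <= tap A x i.
Proof.
move=> hA hx; apply: sumr_ge0 => t _; apply: mulr_ge0 => //; exact: prodr_ge0.
Qed.

End Alg.

Section Alg2.
Variable R : realType.
Variables (n p : nat).
Implicit Types (A : 'I_n -> p.-tuple 'I_n -> R) (x y : 'I_n -> R).

Definition totA A := \sum_i \sum_(t : p.-tuple 'I_n) A i t.

Lemma tap_le_max A x i : (forall i t, 0 <= A i t) -> (forall j, 0 <= x j) ->
  (forall j, x j <= x i) -> tap A x i <= (\sum_t A i t) * x i ^+ p.
Proof.
move=> hA hx hm; rewrite /tap mulr_suml; apply: ler_sum => t _.
apply: ler_wpM2l => //; have -> : x i ^+ p = \prod_(j < p) x i by rewrite prodr_const card_ord.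
by apply: ler_prod => j _; rewrite hx hm.
Qed.

Lemma eig_bound A x mu : (forall i t, 0 <= A i t) -> (forall j, 0 <= x j) ->
  (exists j, 0 < x j) -> (forall i, mu * x i ^+ p <= tap A x i) -> mu <= totA A.
Proof.
move=> hA hx [j0 hj0] hmu.
have [i _ him] := @arg_maxP _ _ _ j0 predT x isT.
have xi : 0 < x i by apply: lt_le_trans hj0 (him _ isT).
have h1 := le_trans (hmu i) (tap_le_max hA hx (fun j => him j isT)).
have hp : 0 < x i ^+ p by apply: exprn_gt0.
rewrite ler_pM2r // in h1; apply: le_trans h1 _.
rewrite /totA (bigD1 i) //= lerDl; apply: sumr_ge0 => k _; exact: sumr_ge0.
Qed.

End Alg2.


Section Clu.
Local Open Scope classical_set_scope.
Variable R : realType.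

Lemma cluster_lemma (N : nat) (u : nat -> 'rV[R]_N) (B : R) :
  (forall k i, - B <= u k ord0 i <= B) ->
  exists x : 'rV[R]_N, (forall i, - B <= x ord0 i <= B) /\
    forall g : 'rV[R]_N -> R, continuous g ->
      (forall e, 0 < e -> exists K, forall k, (K <= k)%N -> - e <= g (u k)) ->
      0 <= g x.
Proof.
move=> hu.
have cK := @rV_compact _ N (fun _ => `[- B, B]) (fun _ => @segment_compact R _ _).
set K := [set v : 'rV[R]_N | _] in cK.
have FK : (u @ \oo) K.
  by exists 0%N => // k _; rewrite /K /= => i; rewrite in_itv /= hu.
have [x [Kx clx]] := cK _ _ FK.
exists x; split.
  by move=> i; have := Kx i; rewrite /= in_itv.
move=> g cg hg; rewrite leNgt; apply/negP => gx.
pose e := - g x / 2.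
have e0 : 0 < e by rewrite /e; lra.
have [K0 hK0] := hg e e0.
have FU : (u @ \oo) [set y | - e <= g y].
  by exists K0 => // k /= hk; apply: hK0.
have NV : nbhs x (g @^-1` (ball (g x) e)).
  by apply: cg; apply: nbhsx_ballx.
have [y [/= hy1 hy2]] := clx _ _ FU NV.
move: hy2; rewrite /ball /= => hy2.
move: hy2; rewrite ltr_distlC => /andP [hy3 hy4].
rewrite /e in hy1 hy3 hy4; lra. Qed.

End Clu.


Section Cont.
Local Open Scope classical_set_scope.
Variable R : realType.
Variable N : nat.
Implicit Types f g : 'rV[R]_N -> R.

Lemma cC (c : R) : continuous (fun _ : 'rV[R]_N => c).
Proof. exact: cst_continuous. Qed.

Lemma cX (i : 'I_N) : continuous (fun v : 'rV[R]_N => v ord0 i).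
Proof. exact: coord_continuous. Qed.

Lemma cD f g : continuous f -> continuous g -> continuous (fun v => f v + g v).
Proof. by move=> hf hg x; exact: (continuousD (hf x) (hg x)). Qed.

Lemma cM f g : continuous f -> continuous g -> continuous (fun v => f v * g v).
Proof. by move=> hf hg x; exact: (continuousM (hf x) (hg x)). Qed.

Lemma cN f : continuous f -> continuous (fun v => - f v).
Proof. by move=> hf x; exact: (continuousN (hf x)). Qed.

Lemma cB f g : continuous f -> continuous g -> continuous (fun v => f v - g v).
Proof. by move=> hf hg; apply: cD => //; apply: cN. Qed.

Lemma cE f k : continuous f -> continuous (fun v => f v ^+ k).
Proof.
move=> hf; elim: k => [|k IH].
  have -> : (fun v => f v ^+ 0) = (fun _ => 1) by apply: funext => v; rewrite expr0.
  exact: cC.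
have -> : (fun v => f v ^+ k.+1) = (fun v => f v * f v ^+ k) by apply: funext => v; rewrite exprS.
exact: cM.
Qed.

Lemma cSum (I : Type) (r : seq I) (P : pred I) (F : I -> 'rV[R]_N -> R) :
  (forall i, continuous (F i)) -> continuous (fun v => \sum_(i <- r | P i) F i v).
Proof. move=> h; apply: continuous_big => //; exact: add_continuous. Qed.

Lemma cProd (I : Type) (r : seq I) (P : pred I) (F : I -> 'rV[R]_N -> R) :
  (forall i, continuous (F i)) -> continuous (fun v => \prod_(i <- r | P i) F i v).
Proof. move=> h; apply: continuous_big => //; exact: mul_continuous. Qed.

Lemma cTap n p (A : 'I_n -> p.-tuple 'I_n -> R) (f : 'I_n -> 'I_N) i :
  continuous (fun v : 'rV[R]_N => tap A (fun j => v ord0 (f j)) i).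
Proof.
apply: cSum => t; apply: cM; first exact: cC.
apply: cProd => j; exact: cX.
Qed.

End Cont.

Section Aux.
Variable R : realType.

Lemma pow_diff (p : nat) : exists C : R, 0 <= C /\ forall a d : R, 0 <= a -> a <= 1 -> 0 <= d -> d <= 1 ->
  (a + d) ^+ p <= a ^+ p + d * C.
Proof.
elim: p => [|p [C [C0 hC]]]; first by exists 0; split => // a d *; rewrite !expr0 mulr0 addr0.
exists (1 + 2 * C); split; first lra.
move=> a d a0 a1 d0 d1; rewrite !exprS.
have h1 := hC a d a0 a1 d0 d1.
have h2 : a ^+ p <= 1 by apply: exprn_ile1.
have h3 : 0 <= a ^+ p by apply: exprn_ge0.
have h4 : (a + d) * (a + d) ^+ p <= (a + d) * (a ^+ p + d * C) by apply: ler_wpM2l => //; lra.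
apply: le_trans h4 _.
have h5 : d * a ^+ p <= d * 1 by apply: ler_wpM2l.
have h6 : (a + d) * (d * C) <= 2 * (d * C) by apply: ler_wpM2r; [apply: mulr_ge0 | lra].
have -> : (a + d) * (a ^+ p + d * C) = a * a ^+ p + d * a ^+ p + (a + d) * (d * C) by ring.
lra.
Qed.

Lemma sum_ge_one (n : nat) (x : 'I_n -> R) (j : 'I_n) : (forall i, 0 <= x i) -> x j <= \sum_i x i.
Proof.
move=> hx; rewrite (bigD1 j) //= lerDl; exact: sumr_ge0.
Qed.

Lemma sum_pos_ex (n : nat) (x : 'I_n -> R) : (forall i, 0 <= x i) -> \sum_i x i = 1 -> exists j, 0 < x j.
Proof.
move=> hx hs; apply/not_existsP => hn.
have : \sum_i x i <= 0.
  apply: sumr_le0 => i _; rewrite leNgt; apply/negP => h; exact: (hn i).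
by rewrite hs; lra.
Qed.

End Aux.

Section StepP.
Variable R : realType.
Variables (n p : nat).
Variable A : 'I_n -> p.-tuple 'I_n -> R.
Hypothesis hA : forall i t, 0 <= A i t.

Definition adm (mu : R) := exists x : 'I_n -> R, (forall j, 0 <= x j) /\ \sum_j x j = 1 /\
  forall i, mu * x i ^+ p <= tap A x i.

Lemma norm_adm (mu : R) (y : 'I_n -> R) : (forall j, 0 <= y j) -> 0 < \sum_j y j ->
  (forall i, mu * y i ^+ p <= tap A y i) -> adm mu.
Proof.
move=> hy hs hmu; set s := \sum_j y j.
exists (fun j => s^-1 * y j); split; [|split].
- by move=> j; apply: mulr_ge0 => //; rewrite invr_ge0 ltW.
- by rewrite -mulr_sumr mulVf // gt_eqF.
- move=> i; rewrite tap_scale exprMn mulrCA; apply: ler_wpM2l => //.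
  by apply: exprn_ge0; rewrite invr_ge0 ltW.
Qed.

Lemma adm_bound mu : adm mu -> mu <= totA A.
Proof.
move=> [x [hx [hs hmu]]]; apply: (eig_bound hA hx _ hmu); exact: sum_pos_ex.
Qed.

Lemma adm_le_one (x : 'I_n -> R) : (forall j, 0 <= x j) -> \sum_j x j = 1 -> forall j, x j <= 1.
Proof. by move=> hx hs j; rewrite -hs; apply: sum_ge_one. Qed.

Hypothesis hApos : forall i t, 0 < A i t.
Hypothesis hp : (0 < p)%N.

Lemma improve (mu : R) (x : 'I_n -> R) (i0 : 'I_n) : 0 <= mu ->
  (forall j, 0 <= x j) -> \sum_j x j = 1 ->
  (forall i, mu * x i ^+ p <= tap A x i) -> mu * x i0 ^+ p < tap A x i0 ->
  exists mu', mu < mu' /\ adm mu'.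
Proof.
move=> mu0 hx hs hmu hi0.
have hx1 := adm_le_one hx hs.
have [C [C0 hC]] := pow_diff R p.
set gap := tap A x i0 - mu * x i0 ^+ p.
have gap0 : 0 < gap by rewrite /gap subr_gt0.
set del := gap / (gap + mu * C + 1).
have den0 : 0 < gap + mu * C + 1 by have := mulr_ge0 mu0 C0; lra.
have del0 : 0 < del by apply: divr_gt0.
have del1 : del <= 1 by rewrite ler_pdivrMr // mul1r; have := mulr_ge0 mu0 C0; lra.
have delC : mu * C * del < gap.
  rewrite /del mulrA ltr_pdivrMr // mulrC ltr_pM2l //; lra.
pose y := fun j => x j + (if j == i0 then del else 0).
have hxy : forall j, x j <= y j by move=> j; rewrite /y lerDl; case: eqP => // _; exact: ltW.
have hy : forall j, 0 <= y j by move=> j; apply: le_trans (hx j) (hxy j).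
have ystrict : forall i, mu * y i ^+ p < tap A y i.
  move=> i; have [-> | ne] := eqVneq i i0.
    apply: (lt_le_trans _ (tap_mono i0 hA hx hxy)).
    rewrite /y eqxx.
    have := hC (x i0) del (hx i0) (hx1 i0) (ltW del0) del1 => hp1.
    have : mu * (x i0 + del) ^+ p <= mu * (x i0 ^+ p + del * C) by apply: ler_wpM2l.
    rewrite /gap in gap0 delC; nra.
  have -> : y i = x i by rewrite /y (negbTE ne) addr0.
  apply: le_lt_trans (hmu i) _.
  pose t0 := [tuple of nseq p i0].
  rewrite -subr_gt0 /tap -sumrB (bigD1 t0) //=.
  apply: ltr_pwDl.
    rewrite -mulrBr; apply: mulr_gt0 => //; rewrite subr_gt0.
    have e : forall z : 'I_n -> R, \prod_(j < p) z (tnth t0 j) = z i0 ^+ p.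
      move=> z; rewrite -[X in _ = _ ^+ X](card_ord p) -prodr_const; apply: eq_bigr => j _.
      by rewrite tnth_nseq.
    rewrite !e /y eqxx ltrXn2r ?(gtn_eqF hp) //; lra.
  apply: sumr_ge0 => t _; rewrite -mulrBr; apply: mulr_ge0 => //; rewrite subr_ge0.
  by apply: ler_prod => j _; rewrite hx hxy.
pose eps := \big[Num.min/1]_i ((tap A y i - mu * y i ^+ p) / (y i ^+ p + 1)).
have eps0 : 0 < eps.
  apply: lt_bigmin => // i _; apply: divr_gt0; first by rewrite subr_gt0.
  by have := exprn_ge0 p (hy i); lra.
exists (mu + eps); split; first lra.
apply: (norm_adm hy).
  apply: lt_le_trans (sum_ge_one i0 hy); rewrite /y eqxx; have := hx i0; lra.
move=> i.
have := bigmin_le 1 i (fun i => (tap A y i - mu * y i ^+ p) / (y i ^+ p + 1)).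
rewrite -/eps /= => he.
have yp0 := exprn_ge0 p (hy i).
rewrite ler_pdivlMr in he; last lra.
nra.
Qed.

End StepP.

Lemma small_inv (R : realType) (e : R) : 0 < e -> exists N : nat, N.+1%:R^-1 < e.
Proof.
move=> e0; exists (Num.Def.archi_bound e^-1).
have ie0 : 0 <= e^-1 by rewrite invr_ge0 ltW.
have h := archi_boundP ie0.
rewrite invf_plt ?posrE //; apply: lt_le_trans h _; rewrite ler_nat; exact: leqnSn.
Qed.

Lemma lim_ineq (R : realType) (a b mu : R) : 0 <= b -> b <= 1 ->
  (forall N : nat, (mu - N.+1%:R^-1) * b <= a) -> mu * b <= a.
Proof.
move=> b0 b1 h; rewrite leNgt; apply/negP => hlt.
have [N hN] : exists N : nat, N.+1%:R^-1 < mu * b - a by apply: small_inv; lra.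
have := h N; have : 0 <= N.+1%:R^-1 :> R by rewrite invr_ge0.
move: (N.+1%:R^-1 : R) hN => z hz z0 hb; nra.
Qed.

Section StepP2.
Variable R : realType.
Variables (n p : nat).
Variable A : 'I_n -> p.-tuple 'I_n -> R.
Hypothesis hA : forall i t, 0 <= A i t.
Hypothesis hApos : forall i t, 0 < A i t.
Hypothesis hp : (0 < p)%N.

Lemma stepP (d : 'I_n -> R) (c : R) : (0 < n)%N -> (forall j, 0 < d j) ->
  (forall i, c * d i ^+ p <= tap A d i) ->
  exists (x : 'I_n -> R) (mu : R), (forall j, 0 <= x j) /\ \sum_j x j = 1 /\ c <= mu /\
    forall i, tap A x i = mu * x i ^+ p.
Proof.
move=> hn hd hc.
have hd0 : forall j, 0 <= d j by move=> j; exact: ltW.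
have sd : 0 < \sum_j d j by apply: lt_le_trans (hd (Ordinal hn)) (sum_ge_one _ hd0).
have admc : adm A c by apply: (norm_adm hd0 sd).
have adm0 : adm A 0 by apply: (norm_adm hd0 sd) => i; rewrite mul0r; exact: tap_ge0.
set S := [set mu | adm A mu]%classic.
have hS : has_sup S by split; [exists c | exists (totA A) => mu /adm_bound; apply].
set ms := sup S.
have cms : c <= ms by apply: sup_upper_bound.
have ms0 : 0 <= ms by apply: sup_upper_bound.
have hseq : forall k : nat, exists x : 'I_n -> R, (forall j, 0 <= x j) /\ \sum_j x j = 1 /\
    forall i, (ms - k.+1%:R^-1) * x i ^+ p <= tap A x i.
  move=> k; have ek : 0 < k.+1%:R^-1 :> R by rewrite invr_gt0 ltr0Sn.
  have [e Se he] := sup_adherent ek hS.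
  have [x [hx [hs hmu]]] := Se; exists x; split => //; split => // i.
  apply: le_trans (hmu i); apply: ler_wpM2r; [exact: exprn_ge0 | exact: ltW].
have [f hf] := boolp.choice hseq.
pose u := fun k => \row_(j < n) f k j.
have uE : forall k, (fun j => u k ord0 j) = f k by move=> k; apply: funext => j; rewrite mxE.
have hu : forall k i, - 1 <= u k ord0 i <= 1.
  move=> k i; rewrite mxE; have [hx [hs _]] := hf k.
  have := adm_le_one hx hs i; have := hx i; lra.
have [x0 [_ hcl]] := cluster_lemma hu.
pose x := fun j => x0 ord0 j.
have trivcond : forall g : 'rV[R]_n -> R, (forall k, 0 <= g (u k)) ->
    forall e : R, 0 < e -> exists K, forall k, (K <= k)%N -> - e <= g (u k).
  move=> g hg e e0; exists 0%N => k _; have := hg k; lra.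
have hx : forall j, 0 <= x j.
  move=> j; apply: (hcl (fun v => v ord0 j)); first exact: cX.
  apply: (trivcond (fun v => v ord0 j)) => k; rewrite mxE; by have [? _] := hf k.
have hs : \sum_j x j = 1.
  have h1 : 0 <= \sum_j x j - 1.
    apply: (hcl (fun v => \sum_j v ord0 j - 1)); first by apply: cB; [apply: cSum => j; exact: cX|exact: cC].
    apply: (trivcond (fun v => \sum_j v ord0 j - 1)) => k; have [_ [hs _]] := hf k.
    by under eq_bigr do rewrite mxE; rewrite hs subrr.
  have h2 : 0 <= 1 - \sum_j x j.
    apply: (hcl (fun v => 1 - \sum_j v ord0 j)); first by apply: cB; [exact: cC|apply: cSum => j; exact: cX].
    apply: (trivcond (fun v => 1 - \sum_j v ord0 j)) => k; have [_ [hs _]] := hf k.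
    by under eq_bigr do rewrite mxE; rewrite hs subrr.
  lra.
have hx1 := adm_le_one hx hs.
have hsup : forall i, ms * x i ^+ p <= tap A x i.
  move=> i; apply: lim_ineq; [exact: exprn_ge0 | exact: exprn_ile1 | move=> N].
  rewrite -subr_ge0.
  apply: (hcl (fun v => tap A (fun j => v ord0 j) i - (ms - N.+1%:R^-1) * v ord0 i ^+ p)).
    by apply: cB; [exact: cTap | apply: cM; [exact: cC | apply: cE; exact: cX]].
  move=> e e0; exists N => k hk; rewrite uE mxE.
  have [hfx [_ hfm]] := hf k.
  have : (ms - N.+1%:R^-1) * f k i ^+ p <= (ms - k.+1%:R^-1) * f k i ^+ p.
    apply: ler_wpM2r; first exact: exprn_ge0.
    rewrite lerD2l lerN2 lef_pV2 ?posrE // ler_nat; exact: hk.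
  move=> h2; apply: (le_trans (_ : -e <= 0)); first lra.
  rewrite subr_ge0; exact: le_trans h2 (hfm i).
exists x, ms; split => //; split => //; split => // i.
apply/eqP; rewrite eq_le hsup andbT leNgt; apply/negP => hlt.
have [mu' [hmu' adm']] := improve hA hApos hp ms0 hx hs hsup hlt.
have := sup_upper_bound hS adm'; rewrite -/ms; lra.
Qed.

End StepP2.

Lemma eventually_small (R : realType) (T : R) : 0 <= T -> forall e : R, 0 < e ->
  exists K : nat, forall k, (K <= k)%N -> k.+1%:R^-1 * T <= e.
Proof.
move=> T0 e e0.
have [K hK] : exists K : nat, K.+1%:R^-1 < e / (T + 1) by apply: small_inv; apply: divr_gt0 => //; lra.
exists K => k hk.
have h1 : k.+1%:R^-1 <= K.+1%:R^-1 :> R by rewrite lef_pV2 ?posrE // ler_nat.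
have h0 : 0 <= k.+1%:R^-1 :> R by rewrite invr_ge0.
rewrite ltr_pdivlMr in hK; last lra.
move: (k.+1%:R^-1 : R) (K.+1%:R^-1 : R) h1 h0 hK => a b; nra.
Qed.

Section StepL.
Variable R : realType.
Variables (n p : nat).
Variable A : 'I_n -> p.-tuple 'I_n -> R.
Hypothesis hA : forall i t, 0 <= A i t.
Hypothesis hp : (0 < p)%N.

Lemma tap_pert (eps : R) x i : tap (fun i t => A i t + eps) x i =
  tap A x i + eps * \sum_(t : p.-tuple 'I_n) \prod_(j < p) x (tnth t j).
Proof. by rewrite /tap mulr_sumr -big_split; apply: eq_bigr => t _; rewrite mulrDl. Qed.

Lemma prod_le1 (x : 'I_n -> R) (t : p.-tuple 'I_n) : (forall j, 0 <= x j) -> (forall j, x j <= 1) ->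
  \prod_(j < p) x (tnth t j) <= 1.
Proof. by move=> h0 h1; apply: prodr_ile1 => j _; rewrite h0 h1. Qed.

Lemma stepL (d : 'I_n -> R) (c : R) : (0 < n)%N -> (forall j, 0 < d j) ->
  (forall i, c * d i ^+ p <= tap A d i) ->
  exists (x : 'I_n -> R) (mu : R), (forall j, 0 <= x j) /\ \sum_j x j = 1 /\ c <= mu /\
    forall i, tap A x i = mu * x i ^+ p.
Proof.
move=> hn hd hc.
have hd0 : forall j, 0 <= d j by move=> j; exact: ltW.
pose Ak (k : nat) := fun i t => A i t + k.+1%:R^-1.
have ek : forall k : nat, 0 < k.+1%:R^-1 :> R by move=> k; rewrite invr_gt0 ltr0Sn.
have ek1 : forall k : nat, k.+1%:R^-1 <= 1 :> R by move=> k; rewrite invf_le1 // ler1n.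
have hAk : forall k i t, 0 < Ak k i t by move=> k i t; rewrite /Ak /=; apply: ltr_wpDl; [exact: hA | exact: ek].
have hseq : forall k : nat, exists xm : ('I_n -> R) * R, (forall j, 0 <= xm.1 j) /\ \sum_j xm.1 j = 1 /\
    c <= xm.2 /\ forall i, tap (Ak k) xm.1 i = xm.2 * xm.1 i ^+ p.
  move=> k.
  have [x [mu [h1 [h2 [h3 h4]]]]] : exists (x : 'I_n -> R) (mu : R), (forall j, 0 <= x j) /\
     \sum_j x j = 1 /\ c <= mu /\ forall i, tap (Ak k) x i = mu * x i ^+ p.
    apply: (stepP (fun i t => ltW (hAk k i t)) (hAk k) hp hn hd) => i.
    apply: le_trans (hc i) _; rewrite /Ak tap_pert lerDl; apply: mulr_ge0; first exact: ltW.
    by apply: sumr_ge0 => t _; apply: prodr_ge0 => j _.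
  by exists (x, mu).
have [f hf] := boolp.choice hseq.
set M := totA (fun i t => A i t + 1).
have hM : forall k, (f k).2 <= M.
  move=> k; have [h1 [h2 [h3 h4]]] := hf k.
  apply: le_trans (_ : totA (Ak k) <= M).
    apply: (eig_bound (fun i t => ltW (hAk k i t)) h1); first exact: sum_pos_ex.
    by move=> i; rewrite h4.
  apply: ler_sum => i _; apply: ler_sum => t _; rewrite /Ak lerD2l; exact: ek1.
set B := 1 + `|c| + `|M|.
pose u := fun k : nat => \row_(j < n + 1) match fintype.split j with inl j' => (f k).1 j' | inr _ => (f k).2 end.
have uL : forall k j, u k ord0 (lshift 1 j) = (f k).1 j.
  by move=> k j; rewrite mxE; have := unsplitK (inl j : 'I_n + 'I_1); rewrite /= => ->.
have uR : forall k, u k ord0 (rshift n ord0) = (f k).2.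
  by move=> k; rewrite mxE; have := unsplitK (inr ord0 : 'I_n + 'I_1); rewrite /= => ->.
have hu : forall k i, - B <= u k ord0 i <= B.
  move=> k i; have [h1 [h2 [h3 h4]]] := hf k.
  have := hM k; have := ler_norm c; have := ler_norm M; have := normr_ge0 c; have := normr_ge0 M.
  rewrite /B -(splitK i); case: (fintype.split i) => [j|j].
    have := adm_le_one h1 h2 j; have := h1 j; rewrite /= uL; lra.
  rewrite (ord1 j) /= uR; have : - c <= `|c| by rewrite -normrN ler_norm.
  lra.
have [x0 [_ hcl]] := cluster_lemma hu.
pose x := fun j => x0 ord0 (lshift 1 j).
pose lam := x0 ord0 (rshift n ord0).
have trivcond : forall g : 'rV[R]_(n + 1) -> R, (forall k, 0 <= g (u k)) ->
    forall e : R, 0 < e -> exists K, forall k, (K <= k)%N -> - e <= g (u k).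
  move=> g hg e e0; exists 0%N => k _; have := hg k; lra.
have hx : forall j, 0 <= x j.
  move=> j; apply: (hcl (fun v => v ord0 (lshift 1 j))); first exact: cX.
  apply: (trivcond (fun v => v ord0 (lshift 1 j))) => k; rewrite uL; by have [? _] := hf k.
have hs : \sum_j x j = 1.
  have h1 : 0 <= \sum_j x j - 1.
    apply: (hcl (fun v => \sum_j v ord0 (lshift 1 j) - 1)).
      by apply: cB; [apply: cSum => j; exact: cX|exact: cC].
    apply: (trivcond (fun v => \sum_j v ord0 (lshift 1 j) - 1)) => k; have [_ [hs _]] := hf k.
    by under eq_bigr do rewrite uL; rewrite hs subrr.
  have h2 : 0 <= 1 - \sum_j x j.
    apply: (hcl (fun v => 1 - \sum_j v ord0 (lshift 1 j))).
      by apply: cB; [exact: cC|apply: cSum => j; exact: cX].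
    apply: (trivcond (fun v => 1 - \sum_j v ord0 (lshift 1 j))) => k; have [_ [hs _]] := hf k.
    by under eq_bigr do rewrite uL; rewrite hs subrr.
  lra.
have hlam : c <= lam.
  rewrite -subr_ge0; apply: (hcl (fun v => v ord0 (rshift n ord0) - c)).
    by apply: cB; [exact: cX | exact: cC].
  apply: (trivcond (fun v => v ord0 (rshift n ord0) - c)) => k; rewrite uR subr_ge0.
  by have [_ [_ [? _]]] := hf k.
exists x, lam; split => //; split => //; split => // i.
have tapE : forall k, tap A (fun j => u k ord0 (lshift 1 j)) i = tap A (f k).1 i.
  by move=> k; congr tap; apply: funext => j; rewrite uL.
have g1 : 0 <= tap A x i - lam * x i ^+ p.
  apply: (hcl (fun v => tap A (fun j => v ord0 (lshift 1 j)) i - v ord0 (rshift n ord0) * v ord0 (lshift 1 i) ^+ p)).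
    by apply: cB; [exact: cTap | apply: cM; [exact: cX | apply: cE; exact: cX]].
  move=> e e0.
  set T := \sum_(t : p.-tuple 'I_n) (1 : R).
  have T0 : 0 <= T by apply: sumr_ge0.
  have [K hK] := eventually_small T0 e0.
  exists K => k hk; rewrite tapE uR uL.
  have [h1 [h2 [h3 h4]]] := hf k.
  have := h4 i; rewrite /Ak tap_pert => h5.
  have hle : k.+1%:R^-1 * \sum_(t : p.-tuple 'I_n) \prod_(j < p) (f k).1 (tnth t j) <= k.+1%:R^-1 * T.
    apply: ler_wpM2l; first exact: ltW.
    apply: ler_sum => t _; apply: prod_le1 => //; exact: adm_le_one.
  have := hK k hk => hT; rewrite -h5 opprD addrA subrr add0r lerN2; exact: le_trans hle hT.
have g2 : 0 <= lam * x i ^+ p - tap A x i.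
  apply: (hcl (fun v => v ord0 (rshift n ord0) * v ord0 (lshift 1 i) ^+ p - tap A (fun j => v ord0 (lshift 1 j)) i)).
    by apply: cB; [apply: cM; [exact: cX | apply: cE; exact: cX] | exact: cTap].
  apply: (trivcond (fun v => v ord0 (rshift n ord0) * v ord0 (lshift 1 i) ^+ p - tap A (fun j => v ord0 (lshift 1 j)) i)) => k.
  rewrite tapE uR uL.
  have [h1 [h2 [h3 h4]]] := hf k.
  have := h4 i; rewrite /Ak tap_pert => h5.
  have : 0 <= k.+1%:R^-1 * \sum_(t : p.-tuple 'I_n) \prod_(j < p) (f k).1 (tnth t j).
    apply: mulr_ge0; first exact: ltW.
    by apply: sumr_ge0 => t _; apply: prodr_ge0 => j _.
  by rewrite -h5 addrC addKr.
lra.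
Qed.

End StepL.

Lemma sum_tuple_prod (R : comSemiRingType) (p : nat) (J : finType) (F : 'I_p -> J -> R) :
  \sum_(a : p.-tuple J) \prod_(j < p) F j (tnth a j) = \prod_(j < p) \sum_(b : J) F j b.
Proof.
rewrite bigA_distr_bigA /=.
rewrite (reindex (fun f : {ffun 'I_p -> J} => [tuple f j | j < p])) /=.
  by apply: eq_bigr => f _; apply: eq_bigr => j _; rewrite tnth_mktuple.
exists (fun t : p.-tuple J => [ffun j => tnth t j]) => [f _ | t _].
  by apply/ffunP => j; rewrite ffunE tnth_mktuple.
by apply: eq_from_tnth => j; rewrite tnth_mktuple ffunE.
Qed.

Lemma rowsum_tprod (R : realType) m k n (A : tensor R m n) (B : tensor R k n)
  (hA : forall i t, 0 <= A i t) (hB : forall i t, 0 <= B i t) i :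
  rowsum (tprod A B) i = tap A (fun j => rowsum B j) i.
Proof.
rewrite /rowsum /tprod /tap.
have nn : forall alpha : (m.-1).-tuple ((k.-1).-tuple 'I_n),
  0 <= \sum_(t : (m.-1).-tuple 'I_n) A i t * \prod_(j < m.-1) B (tnth t j) (tnth alpha j).
  move=> alpha; apply: sumr_ge0 => t _; apply: mulr_ge0 => //; apply: prodr_ge0 => j _; exact: hB.
under eq_bigr => alpha _ do rewrite ger0_norm ?nn //.
rewrite exchange_big /=; apply: eq_bigr => t _; rewrite -mulr_sumr; congr (_ * _).
rewrite (sum_tuple_prod (fun j b => B (tnth t j) b)); apply: eq_bigr => j _.
by apply: eq_bigr => b _; rewrite ger0_norm.
Qed.

Section Cplx.
Variable R : realType.
Local Notation nc := (@ComplexField.Normc.normc R).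

Lemma nc_ge0 (z : R[i]) : 0 <= nc z.
Proof. by case: z => a b /=; apply: sqrtr_ge0. Qed.

Lemma nc_real (r : R) : nc (r%:C)%C = `|r|.
Proof. by rewrite /= expr0n /= addr0 sqrtr_sqr. Qed.

Lemma nc_prod (p : nat) (F : 'I_p -> R[i]) : nc (\prod_(j < p) F j) = \prod_(j < p) nc (F j).
Proof.
apply: (big_morph nc); [exact: ComplexField.Normc.normcM | exact: ComplexField.Normc.normc1].
Qed.

Lemma nc_exp (z : R[i]) (p : nat) : nc (z ^+ p) = nc z ^+ p.
Proof.
elim: p => [|p IH]; first by rewrite !expr0 ComplexField.Normc.normc1.
by rewrite !exprS ComplexField.Normc.normcM IH.
Qed.

Lemma nc_sum (I : finType) (F : I -> R[i]) : nc (\sum_i F i) <= \sum_i nc (F i).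
Proof.
apply: (big_ind2 (fun a b => nc a <= b)).
- by rewrite ComplexField.Normc.normc0.
- by move=> a b c d h1 h2; apply: le_trans (le_normcD _ _) _; apply: lerD.
- by [].
Qed.

End Cplx.

Section Upper.
Variable R : realType.
Local Notation nc := (@ComplexField.Normc.normc R).

Lemma nc_tapply m n (A : tensor R m n) (hA : forall i t, 0 <= A i t) (z : 'I_n -> R[i]) i :
  nc (tapply (tensorC A) z i) <= tap A (fun j => nc (z j)) i.
Proof.
rewrite /tapply.
have h := nc_sum (fun t : (m.-1).-tuple 'I_n => tensorC A i t * \prod_(j < m.-1) z (tnth t j)).
apply: le_trans h _.
apply: ler_sum => t _; rewrite ComplexField.Normc.normcM nc_real nc_prod ger0_norm //.
Qed.

Lemma eig_upper m n (A : tensor R m n) (hA : forall i t, 0 <= A i t) (d : 'I_n -> R)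
  (hd : forall j, 0 < d j) (lam : R[i]) : is_eigenvalue (tensorC A) lam ->
  exists i, nc lam * d i ^+ (m.-1) <= tap A d i.
Proof.
move=> [z [[j0 hz0] heq]].
pose w := fun j => nc (z j) / d j.
have [i _ him] := @arg_maxP _ _ _ j0 predT w isT.
exists i.
have nz0 : 0 < nc (z j0).
  rewrite lt_def nc_ge0 andbT; apply/eqP => h; move/eqP: hz0; apply.
  exact: ComplexField.Normc.eq0_normc.
have wj0 : 0 < w j0 by apply: divr_gt0.
have wi : 0 < w i by apply: lt_le_trans wj0 (him _ isT).
have hzi : nc (z i) = w i * d i by rewrite /w divfK // gt_eqF.
have hzj : forall j, nc (z j) <= w i * d j.
  move=> j; have h : w j <= w i := him j isT; move: h; rewrite {1}/w ler_pdivrMr //.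
have h1 := nc_tapply hA z i.
rewrite heq ComplexField.Normc.normcM nc_exp hzi in h1.
have h2 : tap A (fun j => nc (z j)) i <= tap A (fun j => w i * d j) i.
  by apply: tap_mono => // j; apply: nc_ge0.
rewrite tap_scale in h2.
have h3 := le_trans h1 h2.
rewrite exprMn mulrA [nc lam * _]mulrC -mulrA ler_pM2l ?exprn_gt0 // in h3.
Qed.

End Upper.

End Helpers.
Import Helpers.

Theorem theorem3p1 (R : realType) (m k n : nat) (hm : (2 <= m)%N) (hk : (1 <= k)%N) (hn : (0 < n)%N)
  (A : tensor R m n) (B : tensor R k n)
  (hA : forall i t, 0 <= A i t) (hB : forall i t, 0 <= B i t)
  (hrB : forall i, rowsum B i != 0) :
  let ratio := fun i : 'I_n => rowsum (tprod A B) i / rowsum B i ^+ (m - 1)%N in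
  \big[Num.min/ratio (Ordinal hn)]_(i < n) ratio i <= spectral_radius A /\
  spectral_radius A <= \big[Num.max/ratio (Ordinal hn)]_(i < n) ratio i.
Proof.
move=> ratio.
have hp : (0 < m.-1)%N by rewrite -subn1 subn_gt0.
have em : (m - 1)%N = m.-1 by rewrite subn1.
pose d := fun j => rowsum B j.
have hd : forall j, 0 < d j.
  move=> j; rewrite lt_def hrB /=; apply: sumr_ge0 => t _; exact: normr_ge0.
have hr : forall i, ratio i = tap A d i / d i ^+ m.-1.
  by move=> i; rewrite /ratio rowsum_tprod // em.
set mn := \big[Num.min/ratio (Ordinal hn)]_(i < n) ratio i.
set mx := \big[Num.max/ratio (Ordinal hn)]_(i < n) ratio i.
set E := [set ComplexField.Normc.normc l | l in [set l | is_eigenvalue (tensorC A) l]]%classic.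
have ubE : forall y, E y -> y <= mx.
  move=> y [l hl <-].
  have [i hi] := eig_upper hA hd hl.
  apply: le_trans (le_bigmax _ _ i); rewrite hr ler_pdivlMr //; exact: exprn_gt0.
have hc : forall i, mn * d i ^+ m.-1 <= tap A d i.
  move=> i; have := bigmin_le (ratio (Ordinal hn)) i ratio; rewrite -/mn hr ler_pdivlMr //.
  exact: exprn_gt0.
have [x [mu [hx [hs [cmu heq]]]]] := stepL hA hp hn hd hc.
have Emu : E (ComplexField.Normc.normc (mu%:C)%C).
  exists (mu%:C)%C => //; exists (fun j => (x j)%:C)%C; split.
    have [j hj] := sum_pos_ex hx hs; exists j; apply/negP => /eqP h.
    have := nc_real (x j); rewrite h ComplexField.Normc.normc0 => h0.
    have : `|x j| == 0 by rewrite -h0.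
    by rewrite normr_eq0 => /eqP hz; rewrite hz ltxx in hj.
  move=> i; rewrite /tapply.
  have -> : (mu%:C * (x i)%:C ^+ m.-1)%C = ((mu * x i ^+ m.-1)%:C)%C by rewrite rmorphM rmorphXn.
  rewrite -heq /tap rmorph_sum; apply: eq_bigr => t _; rewrite rmorphM rmorph_prod //.
have hE : has_sup E by split; [exists (ComplexField.Normc.normc (mu%:C)%C) | exists mx].
split.
  apply: le_trans (sup_upper_bound hE Emu); rewrite nc_real.
  by apply: le_trans cmu (ler_norm mu).
apply: ge_sup; first by exists (ComplexField.Normc.normc (mu%:C)%C).
exact: ubE.
Qed.
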